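(* Let $n$ be divisible by $f_Kh_K$, $m=|\mu(K)|$, let $\pi\in W_0^K(p,n)$, and let $\bar\pi\in W_0^K(p^\infty)$ be its image (the class of $\pi^n\in W_0^K(p^n)$). Then the fixed field in $\mathbb{Q}^{\mathrm{al}}$ of the stabilizer $\{\sigma\in\mathrm{Gal}(\mathbb{Q}^{\mathrm{al}}/\mathbb{Q}):\sigma\bar\pi=\bar\pi\}$ equals $\mathbb{Q}[\pi^{mn}]$; equivalently, the centre of $\mathrm{End}(X(\bar\pi))$, where $X(\bar\pi)$ is the simple motive over $\mathbb{F}$ corresponding to $\bar\pi$, is $\mathbb{Q}[\pi^{mn}]$.
   Context: $\mathbb{Q}^{\mathrm{al}}\subset\mathbb{C}$, $p$ prime, $K\subset\mathbb{Q}^{\mathrm{al}}$ a CM field finite Galois over $\mathbb{Q}$, $\mu(K)$ its roots of unity, $f_K$, $h_K$ the common inertia degree and class-group order of the $p$-adic primes of $K$. A Weil $q$-number of weight $0$ ($q$ a power of $p$) is an algebraic $\pi$ with $|\pi'|=1$ for all complex conjugates and $q^N\pi$ integral for some $N$. $n_w(\pi)=\frac{\mathrm{ord}_w(\pi)}{\mathrm{ord}_w(q)}[K_w:\mathbb{Q}_p]$; $W_0^K(q)$ = Weil $q$-numbers of weight $0$ in $K$ with all $n_w\in\mathbb{Z}$; $W_0^K(p^\infty)=\varinjlim W_0^K(p^n)$ (transition maps $\pi\mapsto\pi^{n'/n}$), a Galois module; $W_0^K(p,n)$ = Weil $p$-numbers of weight $0$ with $\pi^n\in W_0^K(p^n)$.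 $\mathbb{Q}[\pi^{mn}]$ is the subfield of $\mathbb{Q}^{\mathrm{al}}$ generated by $\pi^{mn}$. $\mathbb{F}$ is an algebraic closure of $\mathbb{F}_p$; assuming the Tate conjecture, simple motives over $\mathbb{F}$ (numerical equivalence) correspond to Galois orbits of elements of $\varinjlim_n W(p^n)$ (Weil numbers), and the centre of $\mathrm{End}(X(\bar\pi))$ is the fixed field of the stabilizer of $\bar\pi$. *)

(* Defs.v *)
(* Q^al is modelled by mathcomp's algC (algebraic closure of Q
   with its complex conjugation / norm). *)
From HB Require Import structures.
From mathcomp Require Import all_boot all_order all_algebra all_field.
Unset Printing Implicit Defensive.
Import Order.TTheory GRing.Theory Num.Theory.
Local Open Scope ring_scope.

(* Elements of Gal(Q^al/Q): field automorphisms of algC. *)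
Definition isGal (s : {rmorphism algC -> algC}) : Prop := bijective s.

(* Q[a]: the subfield of Q^al generated by a (a is algebraic, so Q[a] = Q(a)). *)
Definition Qgen (a x : algC) : Prop :=
  exists q : {poly rat}, x = (map_poly (ratr : rat -> algC) q).[a].

(* K (a subset of algC) is Galois over Q: stable under Gal(Q^al/Q). *)
Definition GaloisQ (K : algC -> Prop) : Prop :=
  forall s, isGal s -> forall x, K x -> K (s x).

Definition totally_real (F : algC -> Prop) : Prop :=
  forall s, isGal s -> forall x, F x -> s x \is Num.real.

Definition totally_imaginary (K : algC -> Prop) : Prop :=
  forall s, isGal s -> exists x, K x /\ s x \isn't Num.real.

Definition CMfield (K : algC -> Prop) : Prop :=
  exists beta alpha : algC,
    (forall x, Qgen beta x -> K x) /\ K alpha /\ ~ Qgen beta alpha /\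
    (forall x, K x -> exists a b, Qgen beta a /\ Qgen beta b /\ x = a + b * alpha) /\
    totally_real (Qgen beta) /\ totally_imaginary K.

Definition OK (K : algC -> Prop) (x : algC) : Prop := K x /\ x \in Aint.

Definition padic_prime (K : algC -> Prop) (p : nat) (w : algC -> Prop) : Prop :=
  (forall x, w x -> OK K x) /\ w 0 /\
  (forall x y, w x -> w y -> w (x + y)) /\
  (forall a x, OK K a -> w x -> w (a * x)) /\
  ~ w 1 /\
  (forall x y, OK K x -> OK K y -> w (x * y) -> w x \/ w y) /\
  w p%:R.

Fixpoint idpow (K : algC -> Prop) (w : algC -> Prop) (k : nat) (x : algC) : Prop :=
  match k with
  | 0 => OK K x
  | k'.+1 => exists s : seq (algC * algC),
      (forall u, u \in s -> w u.1 /\ idpow K w k' u.2) /\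
      x = \sum_(u <- s) u.1 * u.2
  end.

Definition vint (K w : algC -> Prop) (y : algC) (k : nat) : Prop :=
  idpow K w k y /\ ~ idpow K w k.+1 y.

Definition ordw (K w : algC -> Prop) (x : algC) (k : int) : Prop :=
  exists y z : algC, [/\ OK K y, OK K z, y != 0, z != 0 & x = y / z] /\
    exists ky kz : nat, [/\ vint K w y ky, vint K w z kz & k = ky%:Z - kz%:Z].

(* residue degree f_w : |O_K / w| = p ^ f *)
Definition resdeg (K : algC -> Prop) (p : nat) (w : algC -> Prop) (f : nat) : Prop :=
  exists s : seq algC,
    [/\ size s = (p ^ f)%N, (forall r, r \in s -> OK K r),
        (forall i j, (i < size s)%N -> (j < size s)%N -> i <> j ->
           ~ w (nth 0 s i - nth 0 s j))
      & (forall x, OK K x -> exists r, r \in s /\ w (x - r))].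

(* local degree [K_w : Q_p] = e_w f_w *)
Definition localdeg (K : algC -> Prop) (p : nat) (w : algC -> Prop) (d : nat) : Prop :=
  exists e f : nat, [/\ ordw K w p%:R e%:Z, resdeg K p w f & d = (e * f)%N].

Definition nw_int (K : algC -> Prop) (p : nat) (w : algC -> Prop) (q x : algC) : Prop :=
  forall (k kq : int) (d : nat), ordw K w x k -> ordw K w q kq -> localdeg K p w d ->
    ((k%:~R / kq%:~R * d%:R : rat) \is a Num.int).

Definition Weil0 (p a : nat) (x : algC) : Prop :=
  (forall s, isGal s -> `|s x| = 1) /\
  exists N : nat, ((p%:R ^+ a) ^+ N * x) \in Aint.

Definition W0K (K : algC -> Prop) (p a : nat) (x : algC) : Prop :=
  [/\ K x, Weil0 p a x & forall w, padic_prime K p w -> nw_int K p w (p%:R ^+ a) x].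

Definition W0Kpn (K : algC -> Prop) (p n : nat) (x : algC) : Prop :=
  Weil0 p 1 x /\ W0K K p n (x ^+ n).

(* equality in W_0^K(p^oo) = colim_n W_0^K(p^n), transition maps x |-> x^(n'/n):
   the classes of x in W(p^n) and y in W(p^n') agree *)
Definition wlim_eq (xn yn : algC * nat) : Prop :=
  exists N : nat, [/\ (0 < N)%N, (xn.2 %| N)%N, (yn.2 %| N)%N &
    xn.1 ^+ (N %/ xn.2) = yn.1 ^+ (N %/ yn.2)].

Definition card_mu (K : algC -> Prop) (m : nat) : Prop :=
  exists s : seq algC, [/\ uniq s, size s = m &
    forall x, x \in s <-> (K x /\ exists k : nat, (0 < k)%N /\ x ^+ k = 1)].

Definition principal (K : algC -> Prop) (I : algC -> Prop) : Prop :=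
  exists a, OK K a /\ forall x, I x <-> exists b, OK K b /\ x = a * b.

Definition classord (K w : algC -> Prop) (h : nat) : Prop :=
  [/\ (0 < h)%N, principal K (idpow K w h) &
      forall h', (0 < h')%N -> (h' < h)%N -> ~ principal K (idpow K w h')].

(* Main.v *)
Require Import Defs.
From HB Require Import structures.
From mathcomp Require Import all_boot all_order all_algebra all_field.
Import Order.TTheory GRing.Theory Num.Theory.
Local Open Scope ring_scope.

Lemma Qgen_mul a x y : Qgen a x -> Qgen a y -> Qgen a (x * y).
Proof. by move=> [q ->] [r ->]; exists (q * r); rewrite rmorphM hornerM. Qed.

Lemma Qgen_const a (c : rat) : Qgen a (ratr c).
Proof. by exists c%:P; rewrite map_polyC hornerC. Qed.

Lemma Qgen_trans a b c : Qgen a b -> Qgen b c -> Qgen a c.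
Proof.
move=> [q ->] [r ->]; exists (r \Po q).
by rewrite map_comp_poly horner_comp.
Qed.

Lemma Qgen_self a : Qgen a a.
Proof. by exists 'X; rewrite map_polyX hornerX. Qed.

Lemma fadjoin_Qgen (Qs : fieldExtType rat) (QsC : {rmorphism Qs -> algC})
  (b1 z : Qs) : z \in <<1; b1>>%VS -> Qgen (QsC b1) (QsC z).
Proof.
case/Fadjoin_polyP => q Hq ->.
have aP i: q`_i \in 1%VS by apply/polyOverP.
have a_ i := sig_eqW (vlineP _ _ (aP i)).
exists (\poly_(i < size q) sval (a_ i)).
rewrite -horner_map /=; congr _.[_].
apply/polyP=> i; rewrite !coef_map coef_poly /=.
case: (ltnP i (size q)) => Hi; last first.
  by rewrite nth_default // rmorph0 (rmorph0 (ratr : rat -> algC)).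
have := svalP (a_ i); set a := sval _ => ->.
by rewrite alg_num_field fmorph_rat.
Qed.

Lemma Qgen_inv a y : Qgen a y -> Qgen a y^-1.
Proof.
move=> Hy; apply: (@Qgen_trans _ y _ Hy).
have [Qs [QsC [[|y1 []] //= [Dy] gen]]] := num_field_exists [:: y].
rewrite -Dy -fmorphV; apply: fadjoin_Qgen.
have : y1 \in <<1; y1>>%AS by apply: memv_adjoin.
by rewrite -memvV.
Qed.

Lemma prod_mulz (z : algC) (s : seq algC) :
  \prod_(x <- s) (z * x) = z ^+ size s * \prod_(x <- s) x.
Proof.
elim: s => [|x s IH]; first by rewrite !big_nil mulr1.
by rewrite !big_cons IH exprS mulrACA.
Qed.

Lemma mu_pow (K : algC -> Prop) m z k :
  card_mu K m -> (forall x y, K x -> K y -> K (x * y)) -> K z ->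
  (0 < k)%N -> z ^+ k = 1 -> z ^+ m = 1.
Proof.
move=> [s [us sz Hs]] KM Kz k0 zk.
have z0 : z != 0.
  apply/eqP => z0; move: zk; rewrite z0 expr0n.
  by case: k k0 => // k _ /eqP; rewrite eq_sym oner_eq0.
have sub : {subset map (fun x => z * x) s <= s}.
  move=> _ /mapP[x xs ->]; apply/Hs.
  have [Kx [j [j0 xj]]] := (Hs x).1 xs.
  split; first exact: KM.
  exists (k * j)%N; split; first by rewrite muln_gt0 k0 j0.
  by rewrite exprMn exprM zk expr1n mulnC exprM xj expr1n mulr1.
have um : uniq (map (fun x => z * x) s) by rewrite map_inj_uniq // => x y /mulfI; apply.
have [_ eqs] := uniq_min_size um sub (eq_leq (esym (size_map _ _))).
have pe := uniq_perm um us eqs.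
have := @perm_big _ (@GRing.mul algC) 1 _ _ _ xpredT id pe.
rewrite big_map prod_mulz sz => /eqP.
rewrite -subr_eq0 -{2}[\prod_(i <- s) i]mul1r -mulrBl mulf_eq0 => /orP[].
  by rewrite subr_eq0 => /eqP.
move=> P0; exfalso; move: P0; apply/negP; rewrite prodf_seq_neq0.
apply/allP => x xs /=.
have [_ [j [j0 xj]]] := (Hs x).1 xs.
apply/eqP => x0; move: xj; rewrite x0 expr0n.
by case: j j0 => // j _ /eqP; rewrite eq_sym oner_eq0.
Qed.

Lemma moving (b x : algC) : ~ Qgen b x ->
  exists nu : {rmorphism algC -> algC}, nu b = b /\ nu x != x.
Proof.
move=> nQ.
have [rs Drs] := closed_field_poly_normal (minCpoly x).
rewrite (monicP (minCpoly_monic x)) scale1r in Drs.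
have xrs : x \in rs by rewrite -root_prod_XsubC -Drs root_minCpoly.
have [Qs [QsC [s1 Ds1 gen]]] := num_field_exists (b :: rs).
case: s1 Ds1 gen => [|b1 rs1] //= [Db Drs1] gen.
have [x1 x1rs Dx] : exists2 x1, x1 \in rs1 & x = QsC x1.
  by move: xrs; rewrite -Drs1 => /mapP.
pose E := <<1; b1>>%AS.
have nE : x1 \notin E.
  by apply/negP => /(@fadjoin_Qgen _ QsC); rewrite Db -Dx.
pose p := \prod_(r <- rs1) ('X - r%:P).
have [q [Dq _] _] := minCpolyP x.
have Dp : p = map_poly (in_alg Qs) q.
  apply: (map_poly_inj QsC); rewrite rmorph_prod /= -map_poly_comp.
  rewrite (eq_bigr (fun r => 'X - (QsC r)%:P)); last first.
    by move=> r _; rewrite map_polyXsubC.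
  rewrite -(big_map QsC xpredT (fun r => 'X - r%:P)) Drs1 -Drs Dq.
  by apply: eq_map_poly => a /=; rewrite alg_num_field fmorph_rat.
have pOver : p \is a polyOver 1%VS.
  rewrite Dp; apply/polyOverP => i; rewrite coef_map /=.
  by rewrite memvZ // mem1v.
have pE : p \is a polyOver E := polyOverSv (sub1v _) pOver.
have dvd : minPoly E x1 %| p.
  by apply: minPoly_dvdp pE _; rewrite root_prod_XsubC.
have [msk Dmin] := dvdp_prod_XsubC (F := id) dvd.
set r' := mask msk rs1 in Dmin.
have sep : separable_poly (minPoly E x1).
  have := pcharf0_separable E (ftrans (pchar_lalg Qs) (pchar_num _)) x1.
  by [].
have ur : uniq r' by rewrite -separable_prod_XsubC -(eqp_separable Dmin).
have rootr y : root (minPoly E x1) y = (y \in r').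
  by rewrite (eqp_root Dmin) root_prod_XsubC.
have x1r : x1 \in r' by rewrite -rootr root_minPoly.
have [y yr yx] : exists2 y, y \in r' & y != x1.
  case: (boolP (has (predC1 x1) r')) => [/hasP[y yr /= yx]| /hasPn H].
    by exists y.
  exfalso.
  have sz1 : (size r' <= size [:: x1])%N.
    apply: uniq_leq_size ur _ => z zr; have := H z zr.
    by rewrite /= negbK inE.
  have s2 := root_size_gt1 (monic_neq0 (monic_minPoly E x1)) (root_minPoly E x1).
  move: s2; rewrite (eqp_size Dmin) size_prod_XsubC ltnS => s2.
  have : size (minPoly E x1) = 2%N.
    by rewrite (eqp_size Dmin) size_prod_XsubC; apply/eqP; rewrite eqSS eqn_leq s2 andbT.
  rewrite size_minPoly => /eqP; rewrite eqSS adjoin_deg_eq1.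
  by apply/negP.
have fy : root (map_poly (\1%VF : 'End(Qs)) (minPoly E x1)) y.
  rewrite (eq_map_poly (fun v => id_lfunE v)) map_poly_id //.
  by rewrite rootr.
have homE := kHomExtendP (subvv E) (kHom1 E E) fy.
have spl : splittingFieldFor <<E; x1>>%AS p fullv.
  exists rs1; first exact: eqpxx.
  apply/eqP; rewrite eqEsubv subvf /= -gen /= adjoin_cons.
  by apply: adjoin_seqSl; apply: subv_adjoin.
have [g homg Dg] := kHom_extends (subv_adjoin E x1) homE pE spl.
have gx : g x1 = y.
  by rewrite -Dg ?memv_adjoin // (kHomExtend_val (kHom1 E E) fy).
have gb : g b1 = b1.
  by have [idg _] := kHomP_tmp homg; apply: idg; apply: memv_adjoin.
have g1 : kHom 1 fullv g by apply: kHomSl (sub1v _) homg.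
have gm : monoid_morphism g by apply/kHom_monoid_morphism.
pose gM := GRing.isMonoidMorphism.Build _ _ (fun_of_lfun g) gm.
pose gR : {rmorphism Qs -> Qs} := HB.pack (fun_of_lfun g) gM.
have [nu Dnu] := extend_algC_subfield_aut QsC gR.
exists nu; split.
  by rewrite -Db -Dnu /= gb.
by rewrite Dx -Dnu /= gx (inj_eq (fmorph_inj QsC)).
Qed.

From Stdlib Require Import Classical.

Theorem mainTheorem9 (p : nat) (theta : algC) (fK hK n m : nat) (pi : algC) :
  prime p ->
  GaloisQ (Qgen theta) -> CMfield (Qgen theta) ->
  (forall w, padic_prime (Qgen theta) p w ->
     resdeg (Qgen theta) p w fK /\ classord (Qgen theta) w hK) ->
  (0 < n)%N -> (fK * hK %| n)%N ->
  card_mu (Qgen theta) m ->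
  W0Kpn (Qgen theta) p n pi ->
  forall x : algC,
    (forall s : {rmorphism algC -> algC},
        isGal s -> wlim_eq (s (pi ^+ n), n) (pi ^+ n, n) -> s x = x)
    <-> Qgen (pi ^+ (m * n)) x.
Proof.
move=> pp GK CM Hw n0 dvdn cm [Wpi WK] x.
set a := pi ^+ n.
have Ka : Qgen theta a by case: WK.
have pi0 : pi != 0.
  have := Wpi.1 idfun (Bijective (g := id) (fun _ => erefl) (fun _ => erefl)).
  by move=> h; apply/eqP => e; move: h; rewrite /= e normr0 => /eqP; rewrite eq_sym oner_eq0.
have a0 : a != 0 by rewrite expf_neq0.
have m0 : (0 < m)%N.
  case: cm => s [_ <- Hs].
  have : 1 \in s.
    apply/Hs; split; last by exists 1%N.
    by have := Qgen_const theta 1; rewrite rmorph1.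
  by case: s {Hs}.
have mn : pi ^+ (m * n) = a ^+ m by rewrite mulnC exprM.
clearbody a.
have key s : isGal s -> (wlim_eq (s a, n) (a, n) <-> s (a ^+ m) = a ^+ m).
  move=> sg; split.
    case=> N [N0 _ dN] /= eq.
    have k0 : (0 < N %/ n)%N by rewrite divn_gt0 // dvdn_leq.
    have Kz : Qgen theta (s a * a^-1).
      by apply: Qgen_mul; [exact: GK sg _ Ka | exact: Qgen_inv Ka].
    have zk : (s a * a^-1) ^+ (N %/ n) = 1.
      by rewrite exprMn exprVn eq divff // expf_neq0.
    have := mu_pow _ _ _ _ cm (@Qgen_mul theta) Kz k0 zk.
    rewrite exprMn exprVn rmorphXn => h.
    by rewrite -[LHS](mulfVK (expf_neq0 m a0)) h mul1r.
  move=> e; exists (m * n)%N; split => //=.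
  - by rewrite muln_gt0 m0 n0.
  - by rewrite dvdn_mull.
  - by rewrite dvdn_mull.
  - by rewrite mulnK // -rmorphXn.
split.
  move=> H; case: (classic (Qgen (pi ^+ (m * n)) x)) => // nQ.
  have [nu [nub nux]] := moving _ _ nQ.
  have ig : isGal nu := Bijective (algC_autK nu) (algC_invautK nu).
  have := H nu ig; rewrite (key nu ig) -mn.
  by move=> /(_ nub) e; rewrite e eqxx in nux.
move=> [q ->] s sg /(key s sg) e.
rewrite -horner_map -mn in e *; rewrite e.
by rewrite -map_poly_comp (eq_map_poly (fmorph_rat s)).
Qed.
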